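(* Let $t\ge 3$ and let $T\in\{1,-1\}^t$. Then $\mathfrak{q}(\mathrm{ro}(T))=\mathfrak{q}(T)$. Moreover, with $T^-:=\{e\in\{1,\ldots,t\}: T(e)=-1\}$: (i) if $|T^-\cap\{1,t\}|=1$, then $\boldsymbol{x}(\mathrm{ro}(T))=\boldsymbol{x}(T)\,\overline{\mathbf{U}}(t)\,\overline{\mathbf{T}}(t)$; (ii) if $|T^-\cap\{1,t\}|=2$, then $\boldsymbol{x}(\mathrm{ro}(T))=\boldsymbol{\sigma}(1)+\boldsymbol{x}(T)\,\overline{\mathbf{U}}(t)\,\overline{\mathbf{T}}(t)$; (iii) if $|T^-\cap\{1,t\}|=0$, then $\boldsymbol{x}(\mathrm{ro}(T))=-\boldsymbol{\sigma}(1)+\boldsymbol{x}(T)\,\overline{\mathbf{U}}(t)\,\overline{\mathbf{T}}(t)$.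
   Context: Vectors are row vectors in $\mathbb{R}^t$; $\boldsymbol{\sigma}(e)$ is the $e$-th standard unit vector, $\mathrm{T}^{(+)}=(1,\ldots,1)$. For $S\subseteq\{1,\ldots,t\}$, ${}_{-S}\mathrm{T}^{(+)}$ denotes the vector with entries $-1$ on $S$ and $1$ elsewhere. Define $R^0:=\mathrm{T}^{(+)}$ and $R^s:={}_{-\{1,\ldots,s\}}\mathrm{T}^{(+)}$ for $1\le s\le t-1$. These form a basis of $\mathbb{R}^t$; for $T\in\{1,-1\}^t$, $\boldsymbol{x}(T)$ denotes the unique vector (it lies in $\{-1,0,1\}^t$) with $T=\sum_{i=1}^t x_iR^{i-1}$, and $\mathfrak{q}(T)$ is the number of nonzero entries of $\boldsymbol{x}(T)$. $\overline{\mathbf{U}}(t)$ is the $t\times t$ backward identity matrix ($(i,j)$ entry $\delta_{i+j,t+1}$), $\overline{\mathbf{T}}(t)$ is the $t\times t$ forward shift matrix ($(i,j)$ entry $\delta_{j-i,1}$), and $\mathrm{ro}(T):=-T\,\overline{\mathbf{U}}(t)$. *)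

(* Defs.v *)
From HB Require Import structures.
From mathcomp Require Import all_boot all_order all_algebra.
Set Implicit Arguments. Unset Strict Implicit. Unset Printing Implicit Defensive.
Import Order.TTheory GRing.Theory Num.Theory.
Local Open Scope ring_scope.

(* Indices are 0-based: paper index e in {1..t} corresponds to j : 'I_t with j = e-1. *)

(* Basis matrix: row s (0 <= s <= t-1) is R^s = -1 on {1..s}, 1 elsewhere;
   in 0-based columns j, entry is -1 iff j < s. Row 0 is T^(+). *)
Definition Rmat (R : fieldType) (t : nat) : 'M[R]_t :=
  \matrix_(s < t, j < t) (if (j < s)%N then -1 else 1).

(* x(T): the unique coefficient vector with T = sum_i x_i R^(i-1) = x *m Rmat. *)
Definition xvec (R : fieldType) (t : nat) (T : 'rV[R]_t) : 'rV[R]_t :=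
  T *m invmx (Rmat R t).

Definition qf (R : fieldType) (t : nat) (T : 'rV[R]_t) : nat :=
  #|[set i : 'I_t | xvec T 0 i != 0]|.

Definition Ubar (R : fieldType) (t : nat) : 'M[R]_t :=
  \matrix_(i < t, j < t) ((i + j)%N == t.-1)%:R.

Definition Tbar (R : fieldType) (t : nat) : 'M[R]_t :=
  \matrix_(i < t, j < t) ((j : nat) == i.+1)%:R.

Definition ro (R : fieldType) (t : nat) (T : 'rV[R]_t) : 'rV[R]_t :=
  - (T *m Ubar R t).

Definition sigma1 (R : fieldType) (t : nat) : 'rV[R]_t :=
  \row_(j < t) ((j : nat) == 0%N)%:R.

Definition negends (R : fieldType) (t : nat) (T : 'rV[R]_t) : nat :=
  #|[set j : 'I_t | (T 0 j == -1) && (((j : nat) == 0%N) || ((j : nat) == t.-1))]|.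

(* Main.v *)
Require Import Defs.
From HB Require Import structures.
From mathcomp Require Import all_boot all_order all_algebra.
From mathcomp Require Import lra zify.
Import Order.TTheory GRing.Theory Num.Theory.
Local Open Scope ring_scope.

Section S.
Variable R : realFieldType.
Variable n : nat.

Definition uu (T : 'rV[R]_n.+1) (k : nat) : R := T 0 (inord k).

Definition Xf (T : 'rV[R]_n.+1) : 'rV[R]_n.+1 :=
  \row_(s < n.+1) (if (s : nat) == 0%N then (uu T 0 + uu T n) / 2
                   else (uu T s - uu T s.-1) / 2).

Lemma uuE (T : 'rV[R]_n.+1) (j : 'I_n.+1) : T 0 j = uu T j.
Proof. by rewrite /uu inord_val. Qed.

Lemma keyX (T : 'rV[R]_n.+1) : Xf T *m Rmat R n.+1 = T.
Proof.
apply/rowP => j; rewrite !mxE big_ord_recl !mxE /=.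
pose F i := (uu T i.+1 - uu T i) / 2 * (if (j < i.+1)%N then -1 else 1).
rewrite (eq_bigr (fun i : 'I_n => F i)); last first.
  by move=> i _; rewrite !mxE /=.
rewrite -(big_mkord xpredT F) (@big_cat_nat _ _ _ j) //; last by rewrite -ltnS.
rewrite (@telescope_sumr_eq _ _ _ (fun k => uu T k / 2)) //; last first.
  move=> k /andP[_ hk]; rewrite /F ltnNge hk /=; lra.
rewrite (@telescope_sumr_eq _ _ _ (fun k => - uu T k / 2)) //.
- rewrite uuE /=; lra.
- by rewrite -ltnS.
- move=> k /andP[hk _]; rewrite /F ltnS hk /=; lra.
Qed.

Lemma Rmat_unit : Rmat R n.+1 \in unitmx.
Proof.
have h : (\matrix_i Xf (row i 1%:M)) *m Rmat R n.+1 = 1%:M.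
  by apply/row_matrixP => i; rewrite row_mul rowK keyX.
by case: (mulmx1_unit h).
Qed.

Lemma xvecE (T : 'rV[R]_n.+1) : xvec T = Xf T.
Proof. by rewrite /xvec -{1}(keyX T) -mulmxA mulmxV ?Rmat_unit // mulmx1. Qed.

Lemma UbarE (y : 'rV[R]_n.+1) j : (y *m Ubar R n.+1) 0 j = y 0 (rev_ord j).
Proof.
rewrite mxE (bigD1 (rev_ord j)) //= big1 ?addr0.
  rewrite mxE /= subSS subnK ?eqxx ?mulr1 //; first by rewrite -ltnS.
move=> i hi; rewrite mxE.
case: eqP => [h|]; last by rewrite mulr0.
case/eqP: hi; apply/val_inj => /=.
have := ltn_ord j; lia.
Qed.

Lemma TbarE (y : 'rV[R]_n.+1) (j : 'I_n.+1) : (y *m Tbar R n.+1) 0 j =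
  if (j : nat) == 0%N then 0 else y 0 (inord j.-1).
Proof.
rewrite mxE; case: eqP => hj.
  by rewrite big1 // => i _; rewrite mxE hj /= mulr0.
rewrite (bigD1 (inord j.-1)) //= big1 ?addr0.
  rewrite mxE inordK; last by have := ltn_ord j; lia.
  by rewrite prednK ?eqxx ?mulr1 //; lia.
move=> i hi; rewrite mxE.
case: eqP => [h|]; last by rewrite mulr0.
case/eqP: hi; apply/val_inj => /=.
rewrite inordK; have := ltn_ord j; lia.
Qed.

Lemma uu_ro T k : (k <= n)%N -> uu (ro T) k = - uu T (n - k).
Proof.
move=> hk; rewrite /uu /ro mxE UbarE; congr (- T 0 _); apply/val_inj => /=.
rewrite !inordK; lia.
Qed.

Lemma xro T : xvec (ro T) =
  - (xvec T 0 0) *: sigma1 R n.+1 + xvec T *m Ubar R n.+1 *m Tbar R n.+1.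
Proof.
apply/rowP => j; rewrite !xvecE [RHS]mxE TbarE UbarE.
rewrite [in RHS]mxE [sigma1 _ _ _ _]mxE !mxE /=.
have jn : (j <= n)%N by rewrite -ltnS.
case: eqP => hj.
  rewrite !uu_ro // subn0 subnn mulr1 addr0; lra.
rewrite mulr0 add0r inordK ?subSS; last by lia.
have e1 : (n - j.-1)%N = (n - j).+1 by lia.
rewrite e1 /= !uu_ro ?e1 //; [lra | lia].
Qed.

Definition gg (j : 'I_n.+1) : 'I_n.+1 := inord (if (j : nat) == 0%N then 0%N else (n - j.-1)%N).

Lemma ggK : involutive gg.
Proof.
move=> j; apply/val_inj; rewrite /gg /=.
have jn := ltn_ord j.
have [hj|hj] := eqVneq (j : nat) 0%N.
  by rewrite hj /= (@inordK n 0) // eqxx inordK.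
rewrite (@inordK n (n - j.-1)); last by lia.
have -> : (n - j.-1 == 0)%N = false by apply/eqP; lia.
rewrite inordK; lia.
Qed.

Lemma xro_entry T j : xvec (ro T) 0 j =
  ((if (j : nat) == 0%N then -1 else 1) : R) * xvec T 0 (gg j).
Proof.
rewrite xro [LHS]mxE TbarE UbarE [X in X + _]mxE [sigma1 _ _ _ _]mxE /gg.
case: eqP => hj.
  rewrite mulr1 addr0 mulN1r; congr (- xvec T 0 _); apply/val_inj => /=.
  by rewrite inordK.
rewrite mulr0 add0r mul1r; congr (xvec T 0 _); apply/val_inj => /=.
have jn := ltn_ord j; rewrite (@inordK n j.-1) ?(@inordK n (n - j.-1)); lia.
Qed.

Lemma qf_ro (T : 'rV[R]_n.+1) : qf (ro T) = qf T.
Proof.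
rewrite /qf.
have -> : [set i | xvec (ro T) 0 i != 0] = gg @^-1: [set i | xvec T 0 i != 0].
  apply/setP => i; rewrite !inE xro_entry.
  by case: ifP => _; rewrite ?mulN1r ?oppr_eq0 ?mul1r.
exact/card_preimset/(can_inj ggK).
Qed.

Lemma negendsE (T : 'rV[R]_n.+1) : (0 < n)%N ->
  negends T = addn (T 0 ord0 == -1) (T 0 ord_max == -1).
Proof.
move=> n0; rewrite /negends (cardsD1 ord0) (cardsD1 ord_max).
have -> : [set j : 'I_n.+1 | (T 0 j == -1) && (((j : nat) == 0%N) || ((j : nat) == n.+1.-1))]
   :\ ord0 :\ ord_max = set0.
  apply/setP => j; rewrite !inE.
  rewrite -!(inj_eq val_inj) /=.
  by case: eqP => //= _; case: eqP => //= _; rewrite andbF.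
have ne : (ord_max != ord0 :> 'I_n.+1).
  by rewrite -(inj_eq val_inj) /=; apply/eqP; lia.
rewrite cards0 addn0 !inE ne /= eqxx orbT andbT; congr (_ + _)%N; by rewrite andbT.
Qed.
End S.

Theorem corollary2p3 (R : realFieldType) (t : nat) (T : 'rV[R]_t) :
  (3 <= t)%N ->
  (forall j : 'I_t, T 0 j = 1 \/ T 0 j = -1) ->
  qf (ro T) = qf T /\
  (negends T = 1%N -> xvec (ro T) = xvec T *m Ubar R t *m Tbar R t) /\
  (negends T = 2%N -> xvec (ro T) = sigma1 R t + xvec T *m Ubar R t *m Tbar R t) /\
  (negends T = 0%N -> xvec (ro T) = - sigma1 R t + xvec T *m Ubar R t *m Tbar R t).
Proof.
case: t T => [|n] T // ht hT.
have n0 : (0 < n)%N by lia.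
rewrite qf_ro xro negendsE //.
have x0 : xvec T 0 0 = (T 0 ord0 + T 0 ord_max) / 2.
  by rewrite xvecE mxE /= (@uuE _ _ T ord0) (@uuE _ _ T ord_max).
rewrite x0.
have h1 : (1 == -1 :> R) = false by apply/eqP; lra.
case: (hT ord0) => ->; case: (hT ord_max) => -> /=; rewrite ?h1 ?eqxx /=;
  (split; [done | split; [|split]]) => // _.
- have -> : ((1 + 1) / 2 : R) = 1 by lra.
  by rewrite scaleN1r.
- have -> : ((1 + -1) / 2 : R) = 0 by lra.
  by rewrite oppr0 scale0r add0r.
- have -> : ((-1 + 1) / 2 : R) = 0 by lra.
  by rewrite oppr0 scale0r add0r.
- have -> : ((-1 + -1) / 2 : R) = -1 by lra.
  by rewrite opprK scale1r.
Qed.
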